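(* Let $T = T_d(I)$ be a non-empty, balanced triangular region. Then two tilings of $T$ have the same lattice path sign if and only if the sum of the $E$-counts (which may count some end points $E_j$ multiple times) of the difference cycles is even.
   Context: Let $R=K[x,y,z]$ and $I\subset R$ a monomial ideal. $T_d(I)$ is obtained from the triangle $\mathcal{T}_d$ of side length $d$, subdivided into unit triangles labeled by monomials (downward ones by degree $d-2$, upward ones by degree $d-1$), by removing the triangles whose labels lie in $I$; it is balanced if it has equally many upward- and downward-pointing unit triangles. Lozenges are pairs of unit triangles sharing an edge; tilings cover each triangle exactly once. $L(T)$ is the set of midpoints of edges of triangles of $T$ parallel to the upper-left boundary of $\mathcal{T}_d$ (paths step East or Southeast). $A_1,\dots,A_m$ are the vertices of $L(T)$ lying only on upward-pointing triangles of $T$, $E_1,\dots,E_m$ those lying only on downward-pointing triangles, each ordered by graded reverse-lex order of monomial labels. A tiling $\tau$ determines a family of non-intersecting lattice paths (joining the vertices of $L(T)$ on each lozenge); if the path starting at $A_i$ ends at $E_{\lambda(i)}$, the lattice path sign of $\tau$ is $\operatorname{sgn}(\lambda)$. An $n$-cycle of lozenges in a tiling is an ordered collection of distinct lozenges $\ell_1,\dots,\ell_n$ such that the downward triangle of $\ell_i$ is adjacent to the upward triangle of $\ell_{i+1}$ (indices mod $n$). Its $E$-count is the number of lattice path end points $E_j$ inside the cycle. If $\tau_1,\tau_2$ are tilings with perfect matching permutations $\pi_1,\pi_2$ (bijections from downward to upward triangles given by the lozenges) and $\pi_2=\rho\pi_1$, write $\rho$ as a product of disjoint cycles of length at least two;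 each corresponds to a cycle of lozenges of $\tau_1$, and twisting all of them (re-pairing the downward triangle of $\ell_i$ with the upward triangle of $\ell_{i+1}$) yields $\tau_2$. These lozenge cycles are the difference cycles of $\tau_1$ and $\tau_2$. *)

(* Defs.v *)
From mathcomp Require Import all_boot all_fingroup.
Set Implicit Arguments. Unset Strict Implicit. Unset Printing Implicit Defensive.

(* Monomials x^a y^b z^c of K[x,y,z] are represented by exponent triples.  *)
Definition mon := (nat * nat * nat)%type.
Definition ex (m : mon) : nat := m.1.1.
Definition ey (m : mon) : nat := m.1.2.
Definition ez (m : mon) : nat := m.2.
Definition deg (m : mon) : nat := ex m + ey m + ez m.
Definition mulx (m : mon) : mon := (ex m + 1, ey m, ez m).
Definition muly (m : mon) : mon := (ex m, ey m + 1, ez m).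
Definition mulz (m : mon) : mon := (ex m, ey m, ez m + 1).
Definition divz (m : mon) : mon := (ex m, ey m, ez m - 1).

Definition monos (n : nat) : seq mon :=
  [seq (a, b, n - a - b) | a <- iota 0 n.+1, b <- iota 0 (n - a).+1].

(* A monomial ideal of K[x,y,z] is determined by (and given here as) the set
   of monomials it contains; such a set is exactly a set of monomials closed
   under multiplication by the variables. *)
Definition monomial_ideal (I : pred mon) : Prop :=
  forall m, I m -> [&& I (mulx m), I (muly m) & I (mulz m)].

(* Convention for T_d: the top corner is x^(d-1),
   bottom-left y^(d-1), bottom-right z^(d-1).  Upward triangles carry the
   monomials of degree d-1, downward ones those of degree d-2.  A downward
   triangle m is adjacent to exactly the upward triangles x m (above it,
   sharing a horizontal edge), y m (to its left) and z m (to its right; the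
   shared edge is parallel to the upper-left boundary). *)
Definition inUp (d : nat) (I : pred mon) (u : mon) : bool :=
  (deg u + 1 == d) && ~~ I u.
Definition inDown (d : nat) (I : pred mon) (m : mon) : bool :=
  (deg m + 2 == d) && ~~ I m.

Definition upsT (d : nat) (I : pred mon) : seq mon :=
  [seq u <- monos d.-1 | inUp d I u].
Definition downsT (d : nat) (I : pred mon) : seq mon :=
  [seq m <- monos d.-2 | inDown d I m].

Definition nonempty_region (d : nat) (I : pred mon) : Prop :=
  0 < size (upsT d I) + size (downsT d I).
Definition balanced (d : nat) (I : pred mon) : Prop :=
  size (upsT d I) = size (downsT d I).

(* A tiling
   of T is encoded by its perfect matching pi : downward -> upward triangles
   (lozenges (m, pi m)); every triangle of T lies in exactly one lozenge. *)
Definition lozenge (d : nat) (I : pred mon) (m u : mon) : bool :=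
  [&& inDown d I m, inUp d I u & (u \in [:: mulx m; muly m; mulz m])].

Definition tiling (d : nat) (I : pred mon) (pi : mon -> mon) : Prop :=
  (forall m, inDown d I m -> lozenge d I m (pi m)) /\
  (forall u, inUp d I u -> count (fun m => pi m == u) (downsT d I) = 1).

Definition pinv (d : nat) (I : pred mon) (pi : mon -> mon) (u : mon) : mon :=
  nth u (downsT d I) (find (fun m => pi m == u) (downsT d I)).

(* Every edge parallel to the upper-left boundary is the left edge
   of a unique upward triangle u of T_d; we denote that edge (and its
   midpoint) by u.  Its two neighbouring triangles are u and (if ez u > 0)
   the downward triangle u / z. *)
Definition start_pt (d : nat) (I : pred mon) (u : mon) : bool :=
  inUp d I u && ((ez u == 0) || ~~ inDown d I (divz u)).
Definition end_pt (d : nat) (I : pred mon) (u : mon) : bool :=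
  [&& deg u + 1 == d, ~~ inUp d I u, 0 < ez u & inDown d I (divz u)].

(* graded reverse-lexicographic order (x > y > z) on monomials of one degree *)
Definition grevlex_ge (m n : mon) : bool :=
  (ez m < ez n) || ((ez m == ez n) && (ey m <= ey n)).

Definition As (d : nat) (I : pred mon) : seq mon :=
  sort grevlex_ge [seq u <- monos d.-1 | start_pt d I u].
Definition Es (d : nat) (I : pred mon) : seq mon :=
  sort grevlex_ge [seq u <- monos d.-1 | end_pt d I u].

(* Following a lattice path: on the lozenge containing the upward triangle u
   (whose left edge is the current point), the path moves to the right edge
   of the downward triangle m = pinv u, i.e. to the point  z m. *)
Fixpoint path_end (d : nat) (I : pred mon) (pi : mon -> mon) (fuel : nat)
    (u : mon) : mon :=
  if fuel is f.+1 then
    if inUp d I u then path_end d I pi f (mulz (pinv d I pi u)) else u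
  else u.

Definition lp_odd (d : nat) (I : pred mon) (pi : mon -> mon) : bool :=
  let A := As d I in let E := Es d I in
  match [pick s : {perm 'I_(size A)} |
          [forall i, val (s i) == index (path_end d I pi d (nth (0,0,0) A i)) E]]
  with Some s => odd_perm s | None => false end.

(* The closed curve it determines passes through the
   centres of up_1, down_1, up_2, down_2, ..., down_n (and back to up_1),
   crossing the edge shared by down_i and up_i and the edge shared by down_i
   and up_(i+1). *)
Definition loz_cycle (d : nat) (I : pred mon) (L : seq (mon * mon)) : Prop :=
  [/\ 2 <= size L, uniq L, all (fun l => lozenge d I l.1 l.2) L &
      all (fun p => lozenge d I p.1.1 p.2.2) (zip L (rot 1 L))].

Definition curve_links (L : seq (mon * mon)) : seq (mon * mon) :=
  L ++ [seq (p.1.1, p.2.2) | p <- zip L (rot 1 L)].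

(* "Inside" by the even-odd (ray casting) rule, with the ray from the end
   point e going East along the horizontal mid-line of its row.  That ray
   meets no lattice vertex and no triangle centre; it crosses a link
   (m, u) of the curve exactly when the edge shared by m and u is a
   non-horizontal edge (u = y m or u = z m) of the same row (ex m = ex e)
   lying strictly to the right of e (ez m >= ez e). *)
Definition ray_crosses (e : mon) (l : mon * mon) : bool :=
  [&& ex l.1 == ex e, ez e <= ez l.1 & (l.2 == muly l.1) || (l.2 == mulz l.1)].

Definition inside (e : mon) (L : seq (mon * mon)) : bool :=
  odd (count (ray_crosses e) (curve_links L)).

Definition Ecount (d : nat) (I : pred mon) (L : seq (mon * mon)) : nat :=
  count (fun e => inside e L) (Es d I).

(* Difference cycles of tau_1 (matching pi1) and tau_2 (matching pi2):
   a cycle is given by the list [m_1; ...; m_n] of the downward triangles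
   of its lozenges l_i = (m_i, pi1 m_i), with pi2 m_i = pi1 m_(i+1), i.e.
   (pi1 m_1 ... pi1 m_n) is a cycle of rho = pi2 pi1^-1 of length >= 2.
   [diff_cycles] says that Cs lists all of them, each exactly once. *)
Definition loz_of (pi1 : mon -> mon) (C : seq mon) : seq (mon * mon) :=
  [seq (m, pi1 m) | m <- C].

Definition diff_cycles (d : nat) (I : pred mon) (pi1 pi2 : mon -> mon)
    (Cs : seq (seq mon)) : Prop :=
  (forall C, C \in Cs ->
     [/\ 2 <= size C, uniq C, all (inDown d I) C &
         all (fun p => pi2 p.1 == pi1 p.2) (zip C (rot 1 C))]) /\
  (forall m, inDown d I m -> count_mem m (flatten Cs) = (pi1 m != pi2 m) :> nat).

(* Main.v *)
Require Import Defs.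
From mathcomp Require Import all_boot all_fingroup.
From mathcomp Require Import zify.
Set Implicit Arguments. Unset Strict Implicit. Unset Printing Implicit Defensive.


Definition ninv n (s : 'S_n) : nat :=
  \sum_(i < n) \sum_(j < n) ((i < j) && (s j < s i)).

Lemma lift_perm_decomp n (s : 'S_n.+1) :
  exists s' : 'S_n, s = lift_perm ord0 (s ord0) s'.
Proof.
pose f (k : 'I_n) := odflt k (unlift (s ord0) (s (lift ord0 k))).
have Hf k : lift (s ord0) (f k) = s (lift ord0 k).
  rewrite /f; case: unliftP => [j -> // | /perm_inj/eqP].
  by rewrite lift_eqF.
have f_inj : injective f.
  by move=> a b eab; apply: (lift_inj (h := ord0)); apply: (@perm_inj _ s); rewrite -!Hf eab.
exists (perm f_inj); apply/permP => x.
case: (unliftP ord0 x) => [k -> | ->].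
  by rewrite lift_perm_lift permE Hf.
by rewrite lift_perm_id.
Qed.

Lemma sum_lt n j : j <= n -> \sum_(y < n) (y < j) = j.
Proof.
elim: n j => [|n IH] j hj; first by rewrite big_ord0; case: j hj.
rewrite big_ord_recr /=.
case: (ltnP n j) => hnj.
  have -> : j = n.+1 by apply/eqP; rewrite eqn_leq hj hnj.
  rewrite addn1; congr _.+1.
  have e := IH n (leqnn n); rewrite -[X in _ = X]e.
  by apply: eq_bigr => i _; rewrite ltn_ord (ltn_trans (ltn_ord i)).
by rewrite IH ?addn0.
Qed.

Lemma lift_ltn n (h : 'I_n.+1) (a b : 'I_n) : (lift h a < lift h b) = (a < b).
Proof.
rewrite /= ltn_neqAle leq_bump2 (can_eq (@bumpK h)) -ltn_neqAle //.
Qed.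

Lemma lift_lt_self n (h : 'I_n.+1) (y : 'I_n) : (lift h y < h) = (y < h).
Proof. by rewrite /= /bump; case: (leqP h y) => hy; rewrite ?add1n ?add0n // ltnNge ?(leq_trans hy) // ltnW. Qed.

Lemma ninv_lift n (j : 'I_n.+1) (s : 'S_n) :
  ninv (lift_perm ord0 j s) = j + ninv s.
Proof.
rewrite /ninv big_ord_recl big_ord_recl /=.
rewrite add0n; congr (_ + _).
  have -> : \sum_(i < n) (lift_perm ord0 j s (lift ord0 i) < lift_perm ord0 j s ord0)
            = \sum_(i < n) (s i < j).
    by apply: eq_bigr => k _; rewrite lift_perm_lift lift_perm_id lift_lt_self.
  rewrite (reindex_inj (@perm_inj _ s^-1)) /=.
  under eq_bigr => k _ do rewrite permKV.
  by rewrite sum_lt // -ltnS.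
apply: eq_bigr => i _; rewrite big_ord_recl /= add0n.
apply: eq_bigr => k _; rewrite !lift_perm_lift lift_ltn.
by rewrite /bump !add1n ltnS.
Qed.

Lemma odd_perm_ninv n (s : 'S_n) : odd_perm s = odd (ninv s).
Proof.
elim: n s => [|n IH] s.
  have -> : s = 1%g by apply/permP => -[].
  by rewrite odd_perm1 /ninv big_ord0.
have [s' ->] := lift_perm_decomp s.
by rewrite odd_lift_perm /= ninv_lift oddD IH.
Qed.


Lemma mon_eq (u v : mon) : ex u = ex v -> ey u = ey v -> ez u = ez v -> u = v.
Proof. by case: u => [[a b] c]; case: v => [[a1 b1] c1]; rewrite /ex /ey /ez /= => -> -> ->. Qed.

Lemma mon_eq_deg (u v : mon) : deg u = deg v -> ex u = ex v -> ez u = ez v -> u = v.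
Proof.
rewrite /deg => hd hx hz; apply: mon_eq => //; lia.
Qed.

Lemma mem_monos n u : (u \in monos n) = (deg u == n).
Proof.
apply/allpairsPdep/idP.
  by case=> a [b [ha hb ->]]; rewrite /deg /ex /ey /ez /=; rewrite !mem_iota in ha hb; apply/eqP; lia.
move=> /eqP hd; exists (ex u), (ey u); rewrite !mem_iota; split.
- rewrite /deg in hd; lia.
- rewrite /deg in hd; lia.
- apply: mon_eq => //; rewrite /deg in hd; rewrite /ez /ey /ex /= in hd *; lia.
Qed.

Lemma uniq_monos n : uniq (monos n).
Proof.
apply: allpairs_uniq_dep; first exact: iota_uniq.
  by move=> x _; exact: iota_uniq.
move=> [a b] [a' b'] _ _ /= [ea eb _]; subst a'.
by move: b b' eb => /= b b' ->.
Qed.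

Lemma count1_eq (T : eqType) (P : pred T) (s : seq T) x y :
  count P s = 1 -> x \in s -> y \in s -> P x -> P y -> x = y.
Proof.
rewrite -size_filter => hs hx hy px py.
have hx' : x \in filter P s by rewrite mem_filter px hx.
have hy' : y \in filter P s by rewrite mem_filter py hy.
move: hs hx' hy'; case: (filter P s) => [|z [|w t]] //= _.
by rewrite !inE => /eqP -> /eqP ->.
Qed.

Definition grev_lt (x y : mon) := (x != y) && grevlex_ge x y.

Lemma grevlex_trans : transitive grevlex_ge.
Proof.
move=> y x z; rewrite /grevlex_ge => /orP[h1|/andP[/eqP h1 h1']] /orP[h2|/andP[/eqP h2 h2']];
 apply/orP; (try by left; lia); right; apply/andP; split; try (apply/eqP; lia); lia.
Qed.

Lemma grevlex_total : total grevlex_ge.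
Proof.
move=> x y; rewrite /grevlex_ge; lia.
Qed.

Lemma grevlex_anti x y : deg x = deg y -> grevlex_ge x y -> grevlex_ge y x -> x = y.
Proof.
rewrite /grevlex_ge /deg => hd /orP[h1|/andP[/eqP h1 h1']] /orP[h2|/andP[/eqP h2 h2']];
  try lia.
apply: mon_eq; lia.
Qed.

Lemma sorted_index_lt (s : seq mon) x y :
  sorted grevlex_ge s -> uniq s -> x \in s -> y \in s -> deg x = deg y ->
  (index x s < index y s) = grev_lt x y.
Proof.
move=> ss us xs ys hd; rewrite /grev_lt; apply/idP/idP.
  move=> hlt; apply/andP; split.
    by apply: contraTneq hlt => ->; rewrite ltnn.
  exact: (sorted_ltn_index grevlex_trans ss).
case/andP=> hne hge; rewrite ltnNge leq_eqVlt; apply/negP => /orP[/eqP he|hlt].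
  by move: hne; rewrite -(nth_index x xs) -he nth_index // eqxx.
by move: hne; rewrite (grevlex_anti hd hge (sorted_ltn_index grevlex_trans ss y x ys xs hlt)) eqxx.
Qed.


Ltac unm := rewrite /deg /mulx /muly /mulz /divz /ex /ey /ez /=.

Section Geo.
Variables (d : nat) (I : pred mon) (pi : mon -> mon).
Hypothesis HI : monomial_ideal I.
Hypothesis Ht : tiling d I pi.

Definition step (u : mon) : mon := mulz (pinv d I pi u).
Definition occ (u : mon) : bool :=
  (deg u + 1 == d) &&
  (if ez u == 0 then inUp d I u else inDown d I (divz u) && (pi (divz u) != u)).

Lemma deg_mulx m : deg (mulx m) = (deg m).+1. Proof. unm; lia. Qed.
Lemma deg_muly m : deg (muly m) = (deg m).+1. Proof. unm; lia. Qed.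
Lemma deg_mulz m : deg (mulz m) = (deg m).+1. Proof. unm; lia. Qed.
Lemma divzK u : 0 < ez u -> mulz (divz u) = u.
Proof. by move=> h; apply: mon_eq; move: h; unm; lia. Qed.
Lemma mulzK m : divz (mulz m) = m.
Proof. by apply: mon_eq; unm; lia. Qed.
Lemma deg_divz u : 0 < ez u -> deg (divz u) + 1 = deg u.
Proof. by move=> h; rewrite -{2}(divzK h) deg_mulz addn1. Qed.

Lemma mem_downsT m : (m \in downsT d I) = inDown d I m.
Proof.
rewrite mem_filter mem_monos; apply/andP/idP => [[] //|h]; split => //.
by move: h => /andP[/eqP <- _]; rewrite addn2.
Qed.

Lemma mem_upsT u : (u \in upsT d I) = inUp d I u.
Proof.
rewrite mem_filter mem_monos; apply/andP/idP => [[] //|h]; split => //.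
by move: h => /andP[/eqP <- _]; rewrite addn1.
Qed.

Lemma uniq_downsT : uniq (downsT d I).
Proof. exact/filter_uniq/uniq_monos. Qed.
Lemma uniq_upsT : uniq (upsT d I).
Proof. exact/filter_uniq/uniq_monos. Qed.

Lemma pi_loz m : inDown d I m ->
  inUp d I (pi m) /\ pi m \in [:: mulx m; muly m; mulz m].
Proof. by case: Ht => h _ /h /and3P[_ ? ?]. Qed.

Lemma pinv_spec u : inUp d I u -> inDown d I (pinv d I pi u) /\ pi (pinv d I pi u) = u.
Proof.
case: Ht => _ h /h hc.
have hh : has (fun m => pi m == u) (downsT d I) by rewrite has_count hc.
split; last by apply/eqP; apply: (nth_find u hh).
by rewrite -mem_downsT /pinv mem_nth // -has_find.
Qed.

Lemma pi_inj m1 m2 : inDown d I m1 -> inDown d I m2 -> pi m1 = pi m2 -> m1 = m2.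
Proof.
move=> h1 h2 he; case: Ht => _ /(_ (pi m1) (proj1 (pi_loz h1))) hc.
apply: (count1_eq (x:=m1) (y:=m2) hc); rewrite ?mem_downsT //= he.
exact: eqxx.
Qed.

Lemma pinv_pi m : inDown d I m -> pinv d I pi (pi m) = m.
Proof.
move=> h; have [h1 h2] := pinv_spec (proj1 (pi_loz h)).
exact: pi_inj.
Qed.

Lemma ideal_down u : inUp d I u -> 0 < ez u -> inDown d I (divz u).
Proof.
move=> /andP[/eqP hd hI] hz; rewrite /inDown; apply/andP; split.
  by have := deg_divz hz; lia.
apply: contra hI => /HI /and3P[_ _]; by rewrite divzK.
Qed.

Lemma start_ptE u : start_pt d I u = inUp d I u && (ez u == 0).
Proof.
rewrite /start_pt; case hu: (inUp d I u) => //=.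
have [hz|hz] := posnP (ez u); first by [].
by rewrite (ideal_down hu hz).
Qed.

Lemma occ_start u : occ u && (ez u == 0) = start_pt d I u.
Proof.
rewrite start_ptE /occ; case: (ez u =P 0) => h; rewrite ?andbT ?andbF //.
by rewrite /inUp; case: (deg u + 1 == d).
Qed.

Lemma ex_mulx m : ex (mulx m) = (ex m).+1. Proof. by unm; lia. Qed.
Lemma ey_mulx m : ey (mulx m) = ey m. Proof. by []. Qed.
Lemma ez_mulx m : ez (mulx m) = ez m. Proof. by []. Qed.
Lemma ex_muly m : ex (muly m) = ex m. Proof. by []. Qed.
Lemma ey_muly m : ey (muly m) = (ey m).+1. Proof. by unm; lia. Qed.
Lemma ez_muly m : ez (muly m) = ez m. Proof. by []. Qed.
Lemma ex_mulz m : ex (mulz m) = ex m. Proof. by []. Qed.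
Lemma ey_mulz m : ey (mulz m) = ey m. Proof. by []. Qed.
Lemma ez_mulz m : ez (mulz m) = (ez m).+1. Proof. by unm; lia. Qed.
Lemma ex_divz m : ex (divz m) = ex m. Proof. by []. Qed.
Lemma ez_divz m : ez (divz m) = (ez m).-1. Proof. by unm; lia. Qed.

Lemma loz_cases m u : u \in [:: mulx m; muly m; mulz m] ->
  [\/ u = mulx m, u = muly m | u = mulz m].
Proof. by rewrite !inE => /or3P[] /eqP ->; [constructor 1|constructor 2|constructor 3]. Qed.

Lemma step_occ u : occ u -> inUp d I u ->
  [/\ occ (step u), ez (step u) = (ez u).+1 &
      (ex (step u) = ex u \/ (ex (step u)).+1 = ex u)].
Proof.
move=> ho hu; have [hm hpm] := pinv_spec hu.
rewrite /step; move: hm hpm; set m := pinv d I pi u => hm hpm.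
have [_ hin] := pi_loz hm; rewrite hpm in hin.
have hnz : u <> mulz m.
  move=> e; case/andP: ho => _.
  rewrite (_ : (ez u == 0) = false); last by rewrite e ez_mulz.
  by case/andP => _ /eqP []; rewrite {1}e mulzK hpm.
have hocc : occ (mulz m).
  rewrite /occ ez_mulz /= mulzK hm /=; case/andP: hm => /eqP hd _.
  rewrite deg_mulz -hd addn2 addn1 eqxx /= hpm.
  by apply/eqP => e; apply: hnz.
case: (loz_cases hin) => e //; rewrite e ez_mulz ?ez_mulx ?ez_muly ex_mulz ?ex_mulx ?ex_muly;
  split => //; by [right | left].
Qed.

Lemma step_inj u1 u2 : inUp d I u1 -> inUp d I u2 -> step u1 = step u2 -> u1 = u2.
Proof.
move=> h1 h2 e; have [_ p1] := pinv_spec h1; have [_ p2] := pinv_spec h2.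
by rewrite -p1 -p2 -(mulzK (pinv d I pi u1)) -(mulzK (pinv d I pi u2)); congr (pi (divz _)).
Qed.

Lemma back_occ v : occ v -> 0 < ez v ->
  [/\ occ (pi (divz v)), inUp d I (pi (divz v)), step (pi (divz v)) = v &
      (ez (pi (divz v))).+1 = ez v].
Proof.
move=> ho hz; case/andP: ho => /eqP hdv; rewrite (gtn_eqF hz) => /andP[hm hne].
set m := divz v in hm hne *.
have [hu hin] := pi_loz hm.
have hvm : v = mulz m by rewrite /m divzK.
have hstep : step (pi m) = v by rewrite /step pinv_pi.
have hez : ez (pi m) = ez m.
  case: (loz_cases hin) => e; rewrite e //.
  by move: hne; rewrite e -hvm eqxx.
have hezv : (ez m).+1 = ez v by rewrite hvm ez_mulz.
split => //; last by rewrite hez.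
rewrite /occ; case/andP: (hu) => -> _ /=.
have [h0|hp] := posnP (ez (pi m)); first exact: hu.
rewrite (ideal_down hu hp) /=; apply/eqP => e.
have := pi_inj (ideal_down hu hp) hm e; move=> /(congr1 ez); rewrite ez_divz hez.
by move=> h; move: hp; rewrite hez; lia.
Qed.

Lemma occ_deg u : occ u -> deg u + 1 = d.
Proof. by case/andP => /eqP. Qed.

Lemma ez_le_deg u : ez u <= deg u.
Proof. by rewrite /deg leq_addl. Qed.

Lemma iter_occ k u : occ u -> (forall j, j < k -> inUp d I (iter j step u)) ->
  occ (iter k step u) /\ ez (iter k step u) = ez u + k.
Proof.
move=> ho; elim: k => [|k IH] h; first by rewrite addn0.
have [o1 e1] := IH (fun j hj => h j (ltnW hj)).
have [o2 e2 _] := step_occ o1 (h k (ltnSn k)).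
by rewrite iterS; split => //; rewrite e2 e1 addnS.
Qed.

Definition len u := find (fun k => ~~ inUp d I (iter k step u)) (iota 0 d).

Lemma len_spec u : occ u ->
  [/\ len u < d, ~~ inUp d I (iter (len u) step u) &
      forall j, j < len u -> inUp d I (iter j step u)].
Proof.
move=> ho; set p := fun k => ~~ inUp d I (iter k step u).
have hhas : has p (iota 0 d).
  apply/negPn/negP => /hasPn hn.
  have hall : forall j, j < d -> inUp d I (iter j step u).
    by move=> j hj; have := hn j; rewrite mem_iota /= add0n hj /p negbK; apply.
  have [o e] := iter_occ ho hall.
  have := occ_deg o; have := ez_le_deg (iter d step u); rewrite e; lia.
have hlt : len u < d by rewrite /len -[X in _ < X](size_iota 0 d) -has_find.
split => //.
  by have := nth_find 0 hhas; rewrite nth_iota // add0n.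
move=> j hj; have := before_find 0 hj; rewrite nth_iota ?add0n ?(ltn_trans hj) //.
by rewrite /p => /negbFE.
Qed.

Lemma find_iota_eq (p : pred nat) n c :
  c < n -> p c -> (forall j, j < c -> ~~ p j) -> find p (iota 0 n) = c.
Proof.
move=> hc pc hb.
have hhas : has p (iota 0 n) by apply/hasP; exists c; rewrite // mem_iota.
have hf : find p (iota 0 n) < n by rewrite -[X in _ < X](size_iota 0 n) -has_find.
have pf := nth_find 0 hhas; rewrite nth_iota ?add0n // in pf.
case: (ltngtP (find p (iota 0 n)) c) => // h.
  by move: (hb _ h); rewrite pf.
by move: (before_find 0 h); rewrite nth_iota ?add0n ?(ltn_trans h) // pc.
Qed.

Lemma len_eq u c : c < d -> (forall j, j < c -> inUp d I (iter j step u)) ->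
  ~~ inUp d I (iter c step u) -> len u = c.
Proof.
move=> hc hb hn; apply: find_iota_eq => // j hj; rewrite negbK; exact: hb.
Qed.

Lemma path_end_iter k u fuel : k <= fuel ->
  (forall j, j < k -> inUp d I (iter j step u)) -> ~~ inUp d I (iter k step u) ->
  path_end d I pi fuel u = iter k step u.
Proof.
elim: k u fuel => [|k IH] u [|f] hk hb hn //.
- by rewrite /= (negbTE hn).
- have h0 := hb 0 (ltn0Sn k); rewrite /= in h0.
  rewrite [path_end _ _ _ _ _]/= h0 -/(step u) iterSr; apply: IH => //.
    by move=> j hj; rewrite -iterSr; apply: hb.
  by rewrite -iterSr.
Qed.

Definition ep u := iter (len u) step u.

Lemma path_end_ep u : occ u -> path_end d I pi d u = ep u.
Proof.
move=> ho; have [h1 h2 h3] := len_spec ho.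
by apply: path_end_iter => //; apply: ltnW.
Qed.

Lemma end_ptE u : end_pt d I u = occ u && ~~ inUp d I u.
Proof.
apply/idP/idP.
  case/and4P => hd hnu hz hdn; rewrite /occ hd hnu (gtn_eqF hz) hdn /= andbT.
  apply/eqP => e; have [hu _] := pi_loz hdn; by rewrite e (negbTE hnu) in hu.
case/andP => /andP[hd hif] hnu; rewrite /end_pt hd hnu /=.
move: hif; have [hz|hz] := posnP (ez u); first by rewrite (negbTE hnu).
by case/andP => ->.
Qed.

Lemma ep_end u : occ u -> end_pt d I (ep u) /\ ez (ep u) = ez u + len u.
Proof.
move=> ho; have [h1 h2 h3] := len_spec ho.
have [o e] := iter_occ ho h3.
by rewrite end_ptE /ep o h2.
Qed.

Lemma iter_ord k u1 u2 : occ u1 -> occ u2 -> ez u1 = ez u2 -> ex u2 < ex u1 ->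
  (forall j, j < k -> inUp d I (iter j step u1) && inUp d I (iter j step u2)) ->
  ex (iter k step u2) < ex (iter k step u1).
Proof.
move=> o1 o2 ez12 ex12; elim: k => [|k IH] h //.
have hb : forall j, j < k -> inUp d I (iter j step u1) && inUp d I (iter j step u2).
  by move=> j hj; apply: h; apply: ltnW.
have := IH hb => lt.
have [oa ea] := iter_occ o1 (fun j hj => proj1 (andP (hb j hj))).
have [ob eb] := iter_occ o2 (fun j hj => proj2 (andP (hb j hj))).
case/andP: (h k (ltnSn k)) => ha hb'.
have [sa esa xa] := step_occ oa ha; have [sb esb xb] := step_occ ob hb'.
rewrite !iterS; case: (ltnP (ex (step (iter k step u2))) (ex (step (iter k step u1)))) => // hle.
have hx : ex (step (iter k step u1)) = ex (step (iter k step u2)) by case: xa; case: xb; lia.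
have hs : step (iter k step u1) = step (iter k step u2).
  apply: mon_eq_deg => //.
    by have := occ_deg sa; have := occ_deg sb; lia.
  by rewrite esa esb ea eb ez12.
by move: lt; rewrite (step_inj ha hb' hs) ltnn.
Qed.

Lemma iter_inj k u1 u2 :
  (forall j, j < k -> inUp d I (iter j step u1) && inUp d I (iter j step u2)) ->
  iter k step u1 = iter k step u2 -> u1 = u2.
Proof.
elim: k u1 u2 => [|k IH] u1 u2 h //= e.
case/andP: (h 0 (ltn0Sn k)) => /= h1 h2.
apply: step_inj => //; apply: IH; last by rewrite -!iterSr.
by move=> j hj; rewrite -!iterSr; apply: h.
Qed.

Lemma back_iter c v : occ v -> ez v = c ->
  exists a, [/\ start_pt d I a, iter c step a = v &
                forall j, j < c -> inUp d I (iter j step a)].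
Proof.
elim: c v => [|c IH] v ho hz.
  by exists v; split => //; rewrite -occ_start ho hz.
have hz0 : 0 < ez v by rewrite hz.
have [o1 u1 s1 e1] := back_occ ho hz0.
have e2 : ez (pi (divz v)) = c by apply: succn_inj; rewrite e1 hz.
have [a [ha ia ja]] := IH _ o1 e2.
exists a; split => //; first by rewrite iterS ia.
move=> j; rewrite ltnS leq_eqVlt => /orP[/eqP ->|hj]; first by rewrite ia.
exact: ja.
Qed.

Lemma mem_As a : (a \in As d I) = start_pt d I a.
Proof.
rewrite /As mem_sort mem_filter mem_monos; apply/andP/idP => [[]//|h]; split => //.
by move: h; rewrite start_ptE => /andP[/andP[/eqP <- _] _]; rewrite addn1.
Qed.

Lemma mem_Es e : (e \in Es d I) = end_pt d I e.
Proof.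
rewrite /Es mem_sort mem_filter mem_monos; apply/andP/idP => [[]//|h]; split => //.
by move: h => /and4P[/eqP <- _ _ _]; rewrite addn1.
Qed.

Lemma uniq_As : uniq (As d I).
Proof. by rewrite sort_uniq; apply/filter_uniq/uniq_monos. Qed.
Lemma uniq_Es : uniq (Es d I).
Proof. by rewrite sort_uniq; apply/filter_uniq/uniq_monos. Qed.
Lemma sorted_As : sorted grevlex_ge (As d I).
Proof. exact: (sort_sorted grevlex_total). Qed.
Lemma sorted_Es : sorted grevlex_ge (Es d I).
Proof. exact: (sort_sorted grevlex_total). Qed.

Lemma start_occ a : start_pt d I a -> occ a /\ ez a = 0.
Proof. by rewrite -occ_start => /andP[-> /eqP]. Qed.

Lemma ep_ez a : start_pt d I a -> ez (ep a) = len a.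
Proof. by move=> /start_occ [o z]; have [_ ->] := ep_end o; rewrite z. Qed.

Lemma ep_inj a1 a2 : start_pt d I a1 -> start_pt d I a2 -> ep a1 = ep a2 -> a1 = a2.
Proof.
move=> h1 h2 e; have hl : len a1 = len a2 by rewrite -!ep_ez // e.
have [o1 _] := start_occ h1; have [o2 _] := start_occ h2.
have [_ _ j1] := len_spec o1; have [_ _ j2] := len_spec o2.
apply: (@iter_inj (len a1)); last by move: e; rewrite /ep hl.
by move=> j hj; rewrite j1 // j2 // -hl.
Qed.

Lemma ep_surj e : end_pt d I e -> exists2 a, start_pt d I a & ep a = e.
Proof.
rewrite end_ptE => /andP[o hn].
have [a [ha ia ja]] := back_iter o (erefl (ez e)).
exists a => //; rewrite /ep (@len_eq a (ez e)) ?ia //.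
by have := ez_le_deg e; have := occ_deg o; lia.
Qed.

Lemma perm_AE : perm_eq (map ep (As d I)) (Es d I).
Proof.
apply: uniq_perm; last 1 first.
- move=> e; rewrite mem_Es; apply/mapP/idP.
    by case=> a; rewrite mem_As => ha ->; have [o _] := start_occ ha; case: (ep_end o).
  by case/ep_surj => a ha <-; exists a; rewrite ?mem_As.
- rewrite map_inj_in_uniq ?uniq_As // => a1 a2; rewrite !mem_As; exact: ep_inj.
- exact: uniq_Es.
Qed.

Lemma size_AE : size (As d I) = size (Es d I).
Proof. by rewrite -(perm_size perm_AE) size_map. Qed.

Definition INV :=
  \sum_(a <- As d I) \sum_(a' <- As d I)
     ((index a (As d I) < index a' (As d I)) &&
      (index (ep a') (Es d I) < index (ep a) (Es d I))).

Lemma nth_As_start (i : nat) : i < size (As d I) -> start_pt d I (nth (0,0,0) (As d I) i).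
Proof. by move=> hi; rewrite -mem_As mem_nth. Qed.

Lemma lp_odd_INV : lp_odd d I pi = odd INV.
Proof.
rewrite /lp_odd.
have hlt (i : 'I_(size (As d I))) :
    index (path_end d I pi d (nth (0,0,0) (As d I) i)) (Es d I) < size (As d I).
  have [o _] := start_occ (nth_As_start (ltn_ord i)).
  rewrite path_end_ep //; apply: (leq_trans _ (eq_leq (esym size_AE))).
  by rewrite index_mem mem_Es; case: (ep_end o).
case: pickP => [s /forallP hs | hnone].
  rewrite odd_perm_ninv /ninv /INV; congr odd.
  rewrite (big_nth (0,0,0)) big_mkord; apply: eq_bigr => i _.
  rewrite (big_nth (0,0,0)) big_mkord; apply: eq_bigr => j _.
  rewrite !index_uniq ?uniq_As //.
  have [oi _] := start_occ (nth_As_start (ltn_ord i)).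
  have [oj _] := start_occ (nth_As_start (ltn_ord j)).
  by rewrite -!path_end_ep // -(eqP (hs i)) -(eqP (hs j)).
exfalso.
pose f i := Ordinal (hlt i).
have finj : injective f.
  move=> i j /(congr1 val) /= e.
  have [oi _] := start_occ (nth_As_start (ltn_ord i)).
  have [oj _] := start_occ (nth_As_start (ltn_ord j)).
  have [ei _] := ep_end oi; have [ej _] := ep_end oj.
  rewrite !path_end_ep // in e.
  have := congr1 (nth (0,0,0) (Es d I)) e; rewrite !nth_index ?mem_Es //.
  move/ep_inj => /(_ (nth_As_start (ltn_ord i)) (nth_As_start (ltn_ord j))).
  by move/eqP; rewrite nth_uniq ?uniq_As // => /eqP /val_inj.
have := hnone (perm finj); rewrite /=; move/negbT/negP; apply.
by apply/forallP => i; rewrite permE.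
Qed.

Lemma count_sum (T : Type) (P : pred T) (s : seq T) : count P s = \sum_(x <- s) P x.
Proof. by elim: s => [|x s IH]; rewrite ?big_nil ?big_cons //= IH. Qed.

Lemma start_deg a : start_pt d I a -> deg a + 1 = d.
Proof. by case/start_occ => /occ_deg. Qed.

Lemma As_geo a a' : start_pt d I a -> start_pt d I a' ->
  (index a (As d I) < index a' (As d I)) = (ex a' < ex a).
Proof.
move=> ha ha'; rewrite sorted_index_lt ?sorted_As ?uniq_As ?mem_As //; last first.
  by have := start_deg ha; have := start_deg ha'; lia.
have [_ z] := start_occ ha; have [_ z'] := start_occ ha'.
have hd : deg a = deg a' by have := start_deg ha; have := start_deg ha'; lia.
rewrite /grev_lt /grevlex_ge z z' ltnn eqxx /=.
case: (ltngtP (ex a') (ex a)) => h.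
- have -> : (a != a') by apply/eqP => e; move: h; rewrite e ltnn.
  by move: hd; rewrite /deg z z' /=; lia.
- by rewrite andbC; apply/negbTE; move: hd; rewrite /deg z z' /=; lia.
- by rewrite (mon_eq_deg hd (esym h)) ?z ?z' ?eqxx.
Qed.

Lemma Es_geo a a' : start_pt d I a -> start_pt d I a' -> ex a' < ex a ->
  (index (ep a') (Es d I) < index (ep a) (Es d I)) = (len a' < len a).
Proof.
move=> ha ha' hx.
have [o z] := start_occ ha; have [o' z'] := start_occ ha'.
have [e1 _] := ep_end o; have [e1' _] := ep_end o'.
have hd : deg (ep a') = deg (ep a).
  by move: e1 e1' => /and4P[/eqP h1 _ _ _] /and4P[/eqP h2 _ _ _]; lia.
rewrite sorted_index_lt ?sorted_Es ?uniq_Es ?mem_Es //.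
rewrite /grev_lt /grevlex_ge !ep_ez //.
case: (ltngtP (len a') (len a)) => h /=.
- by rewrite andbT; apply/eqP => e; move: h; rewrite -!ep_ez // e ltnn.
- by rewrite andbF.
- have [_ _ j] := len_spec o; have [_ _ j'] := len_spec o'.
  have := @iter_ord (len a) a a' o o' (etrans z (esym z')) hx.
  have hh : forall k, k < len a -> inUp d I (iter k step a) && inUp d I (iter k step a').
    by move=> k hk; rewrite j // j' // h.
  move=> /(_ hh) hx2.
  have hx3 : ex (ep a') < ex (ep a) by rewrite /ep h.
  have ez1 := ep_ez ha; have ez2 := ep_ez ha'.
  apply/negbTE; apply/nandP; right.
  by move: hd hx3 ez1 ez2; rewrite /deg; lia.
Qed.

Lemma INV_geo : INV = \sum_(a' <- As d I) count (fun a => (ex a' < ex a) && (len a' < len a)) (As d I).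
Proof.
rewrite /INV exchange_big /= [LHS]big_seq [RHS]big_seq; apply: eq_bigr => a' ha'.
rewrite count_sum [LHS]big_seq [RHS]big_seq; apply: eq_bigr => a ha.
rewrite mem_As in ha; rewrite mem_As in ha'; rewrite As_geo //.
case: (ltnP (ex a') (ex a)) => h /=; last by [].
by rewrite (Es_geo ha ha' h).
Qed.

Lemma len_pos a : start_pt d I a -> 0 < len a.
Proof.
move=> ha; have [o _] := start_occ ha; have [_ l2 _] := len_spec o.
rewrite lt0n; apply/eqP => e; move: l2; rewrite e /=.
by move: ha; rewrite start_ptE => /andP[-> _].
Qed.

Lemma count_col a' : start_pt d I a' ->
  count (fun a => (ex a' < ex a) && (len a' < len a)) (As d I) =
  count (fun u => [&& ez u == len a', ex (ep a') < ex u & pi (divz u) != u]) (upsT d I).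
Proof.
move=> ha'; rewrite -!size_filter.
have [o' z'] := start_occ ha'; have [l1 l2 l3] := len_spec o'.
have c0 := len_pos ha'.
set c := len a' in c0 l2 l3 *.
have hP : perm_eq (map (iter c step) (filter (fun a => (ex a' < ex a) && (c < len a)) (As d I)))
                  (filter (fun u => [&& ez u == c, ex (ep a') < ex u & pi (divz u) != u]) (upsT d I)).
  apply: uniq_perm.
  - rewrite map_inj_in_uniq ?(filter_uniq _ uniq_As) //.
    move=> a1 a2; rewrite !mem_filter => /andP[/andP[_ h1] s1] /andP[/andP[_ h2] s2].
    rewrite mem_As in s1; rewrite mem_As in s2.
    have [o1 _] := start_occ s1; have [_ _ j1] := len_spec o1.
    have [o2 _] := start_occ s2; have [_ _ j2] := len_spec o2.
    apply: iter_inj => j hj; rewrite j1 ?j2 //; exact: ltn_trans hj _.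
  - exact: (filter_uniq _ uniq_upsT).
  move=> u; apply/mapP/idP.
    case=> a; rewrite mem_filter => /andP[/andP[hx hl] ha] ->.
    rewrite mem_As in ha.
    have [o z] := start_occ ha; have [_ _ j] := len_spec o.
    have hj : forall k, k < c -> inUp d I (iter k step a) by move=> k hk; apply: j; exact: ltn_trans hk hl.
    have [oc ec] := iter_occ o hj.
    rewrite mem_filter mem_upsT (j _ hl) andbT ec z add0n eqxx /=.
    apply/andP; split.
      apply: iter_ord => //; first by rewrite z z'.
      by move=> k hk; rewrite hj // l3.
    move: oc; rewrite /occ ec z add0n (gtn_eqF c0) => /andP[_ /andP[]] //.
  rewrite mem_filter mem_upsT => /andP[/and3P[/eqP hz hx hne] hu].
  have ou : occ u.
    rewrite /occ hz (gtn_eqF c0) hne (ideal_down hu) ?hz // andbT.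
    by rewrite andbT; case/andP: hu.
  have [a [ha ia ja]] := back_iter ou hz.
  exists a; last by rewrite ia.
  rewrite mem_filter mem_As ha andbT.
  have [o z] := start_occ ha; have [_ l2a _] := len_spec o.
  have hl : c < len a.
    case: (ltnP c (len a)) => // hle; exfalso.
    move: hle; rewrite leq_eqVlt => /orP[/eqP e|hlt].
      by move: l2a; rewrite e ia hu.
    by move: l2a; rewrite ja.
  rewrite hl andbT.
  case: (ltngtP (ex a') (ex a)) => // h.
    have := @iter_ord c a' a o' o (etrans z' (esym z)) h.
    have hh : forall k, k < c -> inUp d I (iter k step a') && inUp d I (iter k step a).
      by move=> k hk; rewrite l3 // ja.
    move=> /(_ hh); rewrite ia -/(ep a') => h2.
    by move: (ltn_trans h2 hx); rewrite ltnn.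
  have e : a' = a.
    apply: mon_eq_deg => //; last by rewrite z z'.
    by have := start_deg ha; have := start_deg ha'; lia.
  by move: hx; rewrite /ep -/c e ia ltnn.
by rewrite -(perm_size hP) size_map.
Qed.

Definition Gsum :=
  \sum_(q <- Es d I)
     count (fun u => [&& ez u == ez q, ex q < ex u & pi (divz u) != u]) (upsT d I).

Lemma INV_G : INV = Gsum.
Proof.
rewrite INV_geo /Gsum -(perm_big _ perm_AE) big_map [LHS]big_seq [RHS]big_seq.
apply: eq_bigr => a ha; rewrite mem_As in ha.
by rewrite count_col // ep_ez.
Qed.

Lemma lp_odd_G : lp_odd d I pi = odd Gsum.
Proof. by rewrite lp_odd_INV INV_G. Qed.

Definition wrow (m : mon) := count (fun e => (ex e == ex m) && (ez e <= ez m)) (Es d I).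
Definition wcol (u : mon) := count (fun q => (ez q == ez u) && (ex q < ex u)) (Es d I).
Definition beta (u : mon) := count (fun e => (ex e < ex u) && (ez e <= ez u)) (Es d I).
Definition psi (m u : mon) := ((u == muly m) || (u == mulz m)) * wrow m.
Definition Fsum (p : mon -> mon) := \sum_(m <- downsT d I) psi m (p m).

Lemma count_split (T : Type) (P P1 P2 : pred T) (s : seq T) :
  (forall x, P x = P1 x || P2 x) -> (forall x, ~~ (P1 x && P2 x)) ->
  count P s = count P1 s + count P2 s.
Proof.
move=> hP hd; elim: s => [|x s IH] //=; rewrite IH hP.
by move: (hd x); case: (P1 x); case: (P2 x) => //= _; lia.
Qed.

Lemma count_andr (T : Type) (P : pred T) (b : bool) (s : seq T) :
  count (fun x => P x && b) s = b * count P s.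
Proof.
elim: s => [|x s IH]; first by rewrite /= muln0.
by rewrite /= IH; case: (b); case: (P x); rewrite /= ?mul1n ?mul0n.
Qed.

Lemma odd_sum_eq (T : eqType) (s : seq T) (f g : T -> nat) :
  (forall x, x \in s -> odd (f x) = odd (g x)) -> odd (\sum_(x <- s) f x) = odd (\sum_(x <- s) g x).
Proof.
elim: s => [|x s IH] h; rewrite ?big_nil // !big_cons !oddD h ?mem_head // IH //.
by move=> y hy; apply: h; rewrite inE hy orbT.
Qed.

Lemma sum_pi (k : mon -> nat) : \sum_(m <- downsT d I) k (pi m) = \sum_(u <- upsT d I) k u.
Proof.
transitivity (\sum_(m <- downsT d I) \sum_(u <- upsT d I) (pi m == u) * k u).
  rewrite [LHS]big_seq [RHS]big_seq; apply: eq_bigr => m hm.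
  rewrite mem_downsT in hm; have [hu _] := pi_loz hm.
  rewrite (bigD1_seq (pi m)) ?mem_upsT ?uniq_upsT //= eqxx mul1n big1 ?addn0 //.
  by move=> u /negbTE; rewrite eq_sym => ->.
rewrite exchange_big /= [LHS]big_seq [RHS]big_seq; apply: eq_bigr => u hu.
rewrite -big_distrl /= -count_sum; case: Ht => _ /(_ u); rewrite -mem_upsT => /(_ hu) ->.
by rewrite mul1n.
Qed.

Lemma wcol0 u : ez u = 0 -> wcol u = 0.
Proof.
move=> h; rewrite /wcol h; apply/eqP; rewrite -leqn0 leqNgt -has_count; apply/hasPn => q.
by rewrite mem_Es => /and4P[_ _ hz _]; rewrite (gtn_eqF hz).
Qed.

Lemma G_eq : Gsum + \sum_(m <- downsT d I) (pi m == mulz m) * wcol (mulz m)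
             = \sum_(u <- upsT d I) wcol u.
Proof.
have hG : Gsum = \sum_(u <- upsT d I) (pi (divz u) != u) * wcol u.
  rewrite /Gsum; under eq_bigr => q _ do rewrite count_sum.
  rewrite exchange_big /=; apply: eq_bigr => u _; rewrite /wcol count_sum big_distrr /=.
  by apply: eq_bigr => q _; rewrite eq_sym; case: (_ == _); case: (_ < _); case: (_ != _).
have hZ : \sum_(m <- downsT d I) (pi m == mulz m) * wcol (mulz m)
          = \sum_(u <- upsT d I) (pi (divz u) == u) * wcol u.
  rewrite -(sum_pi (fun u => (pi (divz u) == u) * wcol u)) [LHS]big_seq [RHS]big_seq.
  apply: eq_bigr => m; rewrite mem_downsT => hm.
  have [hu hin] := pi_loz hm.
  case: (loz_cases hin) => e; rewrite e.
  - have -> : (mulx m == mulz m) = false by apply/eqP => /(congr1 ex); rewrite ex_mulx ex_mulz; lia.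
    have [h0|hp] := posnP (ez (mulx m)); first by rewrite (wcol0 h0) muln0 mul0n.
    have hdm := ideal_down (etrans (esym (f_equal (inUp d I) e)) hu) hp.
    have -> : (pi (divz (mulx m)) == mulx m) = false; last by [].
    apply/eqP => e2.
    move: (congr1 ez (pi_inj hdm hm (etrans e2 (esym e)))); rewrite ez_divz ez_mulx.
    by move: hp; rewrite ez_mulx; lia.
  - have -> : (muly m == mulz m) = false by apply/eqP => /(congr1 ez); rewrite ez_muly ez_mulz; lia.
    have [h0|hp] := posnP (ez (muly m)); first by rewrite (wcol0 h0) muln0 mul0n.
    have hdm := ideal_down (etrans (esym (f_equal (inUp d I) e)) hu) hp.
    have -> : (pi (divz (muly m)) == muly m) = false; last by [].
    apply/eqP => e2.
    move: (congr1 ez (pi_inj hdm hm (etrans e2 (esym e)))); rewrite ez_divz ez_muly.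
    by move: hp; rewrite ez_muly; lia.
  by rewrite mulzK e !eqxx.
rewrite hG hZ -big_split /=; apply: eq_bigr => u _.
by case: (_ == _); rewrite /= ?mul1n ?mul0n ?addn0.
Qed.

Lemma beta_x m : beta (mulx m) = beta (muly m) + wrow m.
Proof.
rewrite /beta /wrow; apply: count_split => e; rewrite ?ex_mulx ?ex_muly ?ez_mulx ?ez_muly.
  lia.
lia.
Qed.

Lemma beta_z m : beta (mulz m) = beta (muly m) + wcol (mulz m).
Proof.
rewrite /beta /wcol; apply: count_split => e; rewrite ?ex_mulz ?ex_muly ?ez_mulz ?ez_muly.
  lia.
lia.
Qed.

Lemma F_eq : odd (Fsum pi + \sum_(m <- downsT d I) (pi m == mulz m) * wcol (mulz m))
   = odd (\sum_(m <- downsT d I) beta (mulx m) + \sum_(u <- upsT d I) beta u).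
Proof.
rewrite /Fsum -big_split -(sum_pi beta) -big_split /=.
apply: odd_sum_eq => m; rewrite mem_downsT => hm.
have [_ hin] := pi_loz hm.
have nxy : (mulx m == muly m) = false by apply/eqP => /(congr1 ex); rewrite ex_mulx ex_muly; lia.
have nxz : (mulx m == mulz m) = false by apply/eqP => /(congr1 ex); rewrite ex_mulx ex_mulz; lia.
have nyz : (muly m == mulz m) = false by apply/eqP => /(congr1 ez); rewrite ez_muly ez_mulz; lia.
rewrite /psi; case: (loz_cases hin) => ->; rewrite ?eqxx ?nxy ?nxz ?nyz /= ?mul0n ?mul1n ?add0n ?addn0.
- by rewrite oddD addbb.
- by rewrite beta_x !oddD addbC addbA addbb.
- rewrite orbT mul1n beta_x beta_z !oddD; by case: (odd (beta (muly m))); case: (odd (wrow m)); case: (odd (wcol (mulz m))).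
Qed.

Lemma GF_const : odd Gsum (+) odd (Fsum pi) =
  odd (\sum_(u <- upsT d I) wcol u) (+)
  odd (\sum_(m <- downsT d I) beta (mulx m) + \sum_(u <- upsT d I) beta u).
Proof.
rewrite -G_eq -F_eq !oddD.
by case: (odd Gsum); case: (odd (Fsum pi)); case: (odd (\sum_(m <- _) _)).
Qed.
End Geo.


Lemma odd_count_odd (T : Type) (f : T -> nat) (s : seq T) :
  odd (count (fun x => odd (f x)) s) = odd (\sum_(x <- s) f x).
Proof.
elim: s => [|x s IH]; first by rewrite big_nil.
by rewrite big_cons /= !oddD IH; case: (odd (f x)).
Qed.

Lemma count_ray d I (l : mon * mon) :
  count (fun e => ray_crosses e l) (Es d I) = psi d I l.1 l.2.
Proof.
rewrite /psi /wrow -count_andr; apply: eq_count => e.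
by rewrite /ray_crosses eq_sym andbA.
Qed.

Lemma Ecount_links d I L :
  odd (Ecount d I L) = odd (\sum_(l <- curve_links L) psi d I l.1 l.2).
Proof.
rewrite /Ecount /inside odd_count_odd.
under eq_bigr => e _ do rewrite count_sum.
rewrite exchange_big /=; congr odd; apply: eq_bigr => l _.
by rewrite -count_ray count_sum.
Qed.

Lemma zip_map2 (S T U V : Type) (f : S -> U) (g : T -> V) s t :
  zip (map f s) (map g t) = map (fun p => (f p.1, g p.2)) (zip s t).
Proof. by elim: s t => [|x s IH] [|y t] //=; rewrite IH. Qed.

Lemma cycle_links d I (pi1 pi2 : mon -> mon) (C : seq mon) :
  all (fun p => pi2 p.1 == pi1 p.2) (zip C (rot 1 C)) ->
  \sum_(l <- curve_links (loz_of pi1 C)) psi d I l.1 l.2 =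
  \sum_(m <- C) (psi d I m (pi1 m) + psi d I m (pi2 m)).
Proof.
move=> /allP hall.
rewrite /curve_links /loz_of big_cat big_map -map_rot zip_map2 -map_comp big_map big_split /=.
congr (_ + _).
rewrite [LHS]big_seq (eq_bigr (fun p => psi d I p.1 (pi2 p.1))); last first.
  by move=> p /hall /eqP ->.
rewrite -big_seq -(big_map fst predT (fun m => psi d I m (pi2 m))).
by rewrite -/(unzip1 _) unzip1_zip // size_rot.
Qed.

Lemma sum_count_mem (T : eqType) (s t : seq T) (f : T -> nat) :
  uniq t -> {subset s <= t} ->
  \sum_(x <- s) f x = \sum_(y <- t) count_mem y s * f y.
Proof.
move=> ut; elim: s => [|x s IH] hs.
  by rewrite big_nil big1 // => y _; rewrite mul0n.
rewrite big_cons IH; last by move=> y hy; apply: hs; rewrite inE hy orbT.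
have hx : x \in t by apply: hs; rewrite mem_head.
rewrite [RHS](eq_bigr (fun y => (x == y) * f y + count_mem y s * f y)); last first.
  by move=> y _; rewrite /= mulnDl.
rewrite big_split /=; congr (_ + _).
rewrite (bigD1_seq x) //= eqxx mul1n big1 ?addn0 // => y.
by rewrite eq_sym => /negbTE ->.
Qed.

Lemma Ecount_sum d I (pi1 pi2 : mon -> mon) Cs :
  diff_cycles d I pi1 pi2 Cs ->
  odd (\sum_(C <- Cs) Ecount d I (loz_of pi1 C)) = odd (Fsum d I pi1) (+) odd (Fsum d I pi2).
Proof.
case=> hC hcnt.
rewrite (odd_sum_eq (g := fun C => \sum_(m <- C) (psi d I m (pi1 m) + psi d I m (pi2 m)))); last first.
  move=> C /hC [_ _ _ hz]; by rewrite Ecount_links (cycle_links d I hz).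
rewrite -big_flatten /= (sum_count_mem _ (uniq_downsT d I)); last first.
  move=> m /flattenP [C hC' hm]; have [_ _ ha _] := hC C hC'.
  by rewrite mem_downsT; exact: (allP ha).
rewrite (odd_sum_eq (g := fun m => psi d I m (pi1 m) + psi d I m (pi2 m))); last first.
  move=> m; rewrite mem_downsT => hm; rewrite hcnt //.
  case: eqP => [->|_]; last by rewrite mul1n.
  by rewrite mul0n oddD addbb.
by rewrite big_split oddD.
Qed.

Lemma xor_fact (a b c e r : bool) : a (+) c = r -> b (+) e = r -> (a = b <-> ~~ (c (+) e)).
Proof. by case: a; case: b; case: c; case: e; case: r. Qed.

Theorem corollary4p5 (d : nat) (I : pred mon) (pi1 pi2 : mon -> mon)
    (Cs : seq (seq mon)) :
  monomial_ideal I -> nonempty_region d I -> balanced d I ->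
  tiling d I pi1 -> tiling d I pi2 -> diff_cycles d I pi1 pi2 Cs ->
  (lp_odd d I pi1 = lp_odd d I pi2 <->
   ~~ odd (\sum_(C <- Cs) Ecount d I (loz_of pi1 C))).
Proof.
move=> HI _ _ T1 T2 HC.
rewrite (Ecount_sum HC) (lp_odd_G HI T1) (lp_odd_G HI T2).
exact: (xor_fact (GF_const HI T1) (GF_const HI T2)).
Qed.
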